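(* Let $X$ be a topological space, $x\in X$, and $\mathcal B_x$ a local base at $x$. Then $\bigcap\{\overline{B}:B\in\mathcal B_x\}$ equals the union of all finitely non-Hausdorff subsets of $X$ that contain $x$, and it also equals the union of all maximal finitely non-Hausdorff subsets of $X$ that contain $x$.
   Context: A non-empty subset $A$ of a topological space $X$ is called finitely non-Hausdorff if for every non-empty finite subset $F\subseteq A$ and every family $\{U_y:y\in F\}$ where each $U_y$ is an open neighborhood of $y$, we have $\bigcap_{y\in F}U_y\neq\emptyset$. It is maximal finitely non-Hausdorff if no finitely non-Hausdorff subset of $X$ properly contains it. *)

(* Defs.v *)
From HB Require Import structures.
From mathcomp Require Import all_boot all_classical.
From mathcomp Require Import topology.
Set Implicit Arguments. Unset Strict Implicit. Unset Printing Implicit Defensive.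
Local Open Scope classical_set_scope.

Definition fin_non_hausdorff {X : topologicalType} (A : set X) : Prop :=
  A !=set0 /\
  forall F : set X, finite_set F -> F !=set0 -> F `<=` A ->
  forall U : X -> set X, (forall y, F y -> open (U y) /\ U y y) ->
  (\bigcap_(y in F) U y) !=set0.

Definition max_fin_non_hausdorff {X : topologicalType} (A : set X) : Prop :=
  fin_non_hausdorff A /\
  forall B : set X, fin_non_hausdorff B -> A `<=` B -> B = A.

Definition local_base {X : topologicalType} (x : X) (BB : set (set X)) : Prop :=
  (forall B, BB B -> open B /\ B x) /\
  (forall U, nbhs x U -> exists2 B, BB B & B `<=` U).

(* Main.v *)
Require Import Defs.
From HB Require Import structures.
From mathcomp Require Import all_boot all_classical.
From mathcomp Require Import topology.
Local Open Scope classical_set_scope.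

Section Aux.
Context (X : topologicalType).

Lemma pair_fnH (x z : X) (BB : set (set X)) :
  local_base x BB -> (forall B, BB B -> closure B z) ->
  fin_non_hausdorff [set x; z].
Proof.
move=> [HB1 HB2] Hz; split; first by exists x; left.
move=> G _ [g Gg] GS U HU.
case: (pselect (G x /\ G z)) => [[Gx Gz]|nG].
  have [Ux1 Ux2] := HU x Gx.
  have [B BBB BU] := HB2 (U x) (open_nbhs_nbhs (conj Ux1 Ux2)).
  have [Uz1 Uz2] := HU z Gz.
  have [w [Bw Uzw]] := Hz B BBB (U z) (open_nbhs_nbhs (conj Uz1 Uz2)).
  exists w => y /GS [->|->] //; exact: BU.
have eqG : forall y y', G y -> G y' -> y = y'.
  move=> y y' Gy Gy'.
  case: (GS y Gy) => ey; case: (GS y' Gy') => ey'; rewrite ey ey' //.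
    by exfalso; apply: nG; split; [rewrite -ey|rewrite -ey'].
  by exfalso; apply: nG; split; [rewrite -ey'|rewrite -ey].
exists g => y Gy; rewrite (eqG y g Gy Gg); exact: (HU g Gg).2.
Qed.


Lemma chain_seq (S : set X) (F : set (set X)) :
  total_on F subset -> forall s : seq X,
  [set` s] `<=` S `|` \bigcup_(A in F) A ->
  exists A, (A = set0 \/ F A) /\ [set` s] `<=` S `|` A.
Proof.
move=> tot; elim=> [|y s IH] Hs.
  by exists set0; split; [left|move=> w /=; rewrite in_nil].
have Hs' : [set` s] `<=` S `|` \bigcup_(A in F) A.
  by move=> w /= ws; apply: Hs => /=; rewrite in_cons ws orbT.
have [A [HA sA]] := IH Hs'.
have : (S `|` \bigcup_(A in F) A) y by apply: Hs => /=; rewrite in_cons eqxx.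
case=> [Sy|[B FB By]].
  exists A; split => // w /=; rewrite in_cons => /orP[/eqP ->|ws]; first by left.
  exact: sA.
case: HA => [A0|FA].
  exists B; split; [by right|] => w /=; rewrite in_cons => /orP[/eqP ->|ws]; first by right.
  by case: (sA w ws) => [?|]; [left|rewrite A0].
case: (tot A B FA FB) => [AB|BA].
  exists B; split; [by right|] => w /=; rewrite in_cons => /orP[/eqP ->|ws]; first by right.
  by case: (sA w ws) => [?|/AB]; [left|right].
exists A; split; [by right|] => w /=; rewrite in_cons => /orP[/eqP ->|ws]; first by right; apply: BA.
exact: sA.
Qed.

Lemma fnH_closure (x z : X) (BB : set (set X)) (A : set X) :
  local_base x BB -> fin_non_hausdorff A -> A x -> A z ->
  forall B, BB B -> closure B z.
Proof.
move=> [HB1 HB2] [_ HA] Ax Az B BBB N Nz.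
have [Bo Bx] := HB1 B BBB.
case: (pselect (x = z)) => [exz|nxz].
  by exists x; split => //; apply: nbhs_singleton; rewrite exz.
pose U y := if pselect (y = x) then B else N°.
have GS : [set x; z] `<=` A by move=> y [->|->].
have [|w Hw] := HA [set x; z] (finite_set2 x z) (ex_intro _ x (or_introl erefl)) GS U.
  move=> y [->|->]; rewrite /U.
    by destruct (pselect (x = x)).
  destruct (pselect (z = x)) as [e|ne]; first by exfalso; apply: nxz.
  by split; [exact: open_interior|exact: Nz].
have := Hw x (or_introl erefl); rewrite /U; destruct (pselect (x = x)) => // Bw.
have := Hw z (or_intror erefl); rewrite /U; destruct (pselect (z = x)) as [e2|ne2] => [|Nw].
  by exfalso; apply: nxz.
by exists w; split => //; apply: interior_subset.
Qed.

End Aux.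

Theorem lemma2p9 (X : topologicalType) (x : X) (BB : set (set X)) :
  local_base x BB ->
  (\bigcap_(B in BB) closure B =
     \bigcup_(A in [set A : set X | fin_non_hausdorff A /\ A x]) A) /\
  (\bigcap_(B in BB) closure B =
     \bigcup_(A in [set A : set X | max_fin_non_hausdorff A /\ A x]) A).
Proof.
move=> lb.
have maxex : forall z, (forall B, BB B -> closure B z) ->
    exists2 M, max_fin_non_hausdorff M /\ M x & M z.
  move=> z Hz.
  pose S := [set x; z].
  have fS : fin_non_hausdorff S := @pair_fnH X x z BB lb Hz.
  pose P := fun A : set X => fin_non_hausdorff (S `|` A).
  have [|A0 [PA0 mA0]] := @Zorn_bigcup X P.
    move=> F FP tot; split; first by exists x; left; left.
    move=> G fG nG GS U HU.
    have [s Gs] := (finite_seqP G).1 fG.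
    have [A [HA sA]] : exists A, (A = set0 \/ F A) /\ [set` s] `<=` S `|` A.
      by apply: chain_seq => //; rewrite -Gs.
    have PA : P A by case: HA => [->|/FP //]; rewrite /P setU0.
    by apply: PA.2 => //; rewrite Gs.
  exists (S `|` A0); last by left; right.
  split; last by left; left.
  split => // B fB MB.
  have PB : P B by rewrite /P (setUidPr _ _).2 //; move=> w Sw; apply: MB; left.
  have BA0 : B `<=` A0.
    case: (pselect (B `<=` A0)) => // nBA.
    exfalso; apply: (mA0 B) => //; split => //.
    by move=> w A0w; apply: MB; right.
  by apply/seteqP; split => // w Bw; right; apply: BA0.
have fwd : \bigcap_(B in BB) closure B `<=`
    \bigcup_(A in [set A : set X | max_fin_non_hausdorff A /\ A x]) A.
  by move=> z Hz; have [M HM Mz] := maxex z Hz; exists M.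
have bwd : \bigcup_(A in [set A : set X | fin_non_hausdorff A /\ A x]) A `<=`
    \bigcap_(B in BB) closure B.
  by move=> z [A [fA Ax] Az] B BBB; exact: (@fnH_closure X x z BB A lb fA Ax Az).
have mid : \bigcup_(A in [set A : set X | max_fin_non_hausdorff A /\ A x]) A `<=`
    \bigcup_(A in [set A : set X | fin_non_hausdorff A /\ A x]) A.
  by move=> z [A [[fA _] Ax] Az]; exists A.
split; apply/seteqP; split => //.
- by move=> z /fwd /mid.
- by move=> z /mid /bwd.
Qed.
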